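(* Let $b_1,r_1,b_2,r_2$ be positive integers with $b_1r_2-b_2r_1=1$, and let $n>0$ be an integer which is not of the form $xr_1+yr_2$ for any integers $x,y>0$. Then there is no rational number of the form $\frac{b}{n}$ with $b$ an integer lying in the open interval $(\frac{b_2}{r_2},\frac{b_1}{r_1})$, and $$\Delta^n(b_1+b_2,r_1+r_2)=\Delta^n(b_1,r_1)+\Delta^n(b_2,r_2).$$
   Context: For positive integers $b,r$ and an integer $j\ge 1$, let $\overline{jb}$ denote the residue of $jb$ modulo $r$ in $\{0,\dots,r-1\}$, and define $$\overline{M}^j(b,r)=\frac{\overline{jb}\,(r-\overline{jb})}{2r},\qquad M^j(b,r)=\frac{jb\,(r-jb)}{2r},\qquad \Delta^j(b,r)=\overline{M}^j(b,r)-M^j(b,r).$$ *)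

(* Defs.v *)
From mathcomp Require Import all_boot all_order all_algebra.
Set Implicit Arguments. Unset Strict Implicit. Unset Printing Implicit Defensive.
Import Order.TTheory GRing.Theory Num.Theory.
Local Open Scope ring_scope.

Definition resid (j b r : nat) : nat := (j * b %% r)%N.

Definition Mbar (j b r : nat) : rat :=
  ((resid j b r)%:R * (r%:R - (resid j b r)%:R)) / (2 * r%:R).

(* M^j(b,r) = jb (r - jb) / (2r)  (computed in rat, r - jb may be negative) *)
Definition Mj (j b r : nat) : rat :=
  ((j * b)%:R * (r%:R - (j * b)%:R)) / (2 * r%:R).

Definition Delta (j b r : nat) : rat := Mbar j b r - Mj j b r.

(* Main.v *)
Require Import Defs.
From mathcomp Require Import all_boot all_order all_algebra.
From mathcomp Require Import zify ring lra.
Import Order.TTheory GRing.Theory Num.Theory.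
Local Open Scope ring_scope.

Lemma key (j b r q : nat) : (0 < r)%N -> (q * r <= j * b)%N -> (j * b <= q.+1 * r)%N ->
  Delta j b r = q%:R * (2 * (j * b)%:R - (q.+1)%:R * r%:R) / 2 :> rat.
Proof.
move=> r0 h1 h2.
have rn0 : (r%:R : rat) != 0 by rewrite pnatr_eq0 -lt0n.
rewrite /Delta /Mbar /Mj /resid.
have [lt|gt|eq] := ltngtP (j * b) (q.+1 * r); last first.
- rewrite eq modnMl mulSn natrD natrM.
  by field.
- by move: gt; rewrite ltnNge h2.
- have hd : (j * b %/ r = q)%N.
    by apply/eqP; rewrite eqn_leq -ltnS ltn_divLR // lt leq_divRL.
  have hs : ((j * b) %% r)%:R = (j * b)%:R - q%:R * r%:R :> rat.
    have := divn_eq (j * b) r; rewrite hd => E.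
    by rewrite {2}E natrD natrM addrAC subrr add0r.
  rewrite hs; set J := (j * b)%:R; field.
  exact: rn0.
Qed.

Lemma nobetween (b1 r1 b2 r2 n : nat) :
  (b1%:Z * r2%:Z - b2%:Z * r1%:Z = 1) ->
  ~ (exists x y : int, 0 < x /\ 0 < y /\ n%:Z = x * r1%:Z + y * r2%:Z) -> forall k : int,
  ~ (n%:Z * b2%:Z < k * r2%:Z /\ k * r1%:Z < n%:Z * b1%:Z).
Proof.
move=> h H k [l1 l2]; apply: H.
exists (k * r2%:Z - n%:Z * b2%:Z), (n%:Z * b1%:Z - k * r1%:Z).
split; first by rewrite subr_gt0.
split; first by rewrite subr_gt0.
rewrite -[LHS]mulr1 -h; ring.
Qed.

Theorem lemma2p2 (b1 r1 b2 r2 n : nat) :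
  (0 < b1)%N -> (0 < r1)%N -> (0 < b2)%N -> (0 < r2)%N ->
  (b1%:Z * r2%:Z - b2%:Z * r1%:Z = 1) ->
  (0 < n)%N ->
  ~ (exists x y : int, 0 < x /\ 0 < y /\ n%:Z = x * r1%:Z + y * r2%:Z) ->
  (forall b : int,
      ~ ((b2%:R / r2%:R : rat) < b%:~R / n%:R /\ b%:~R / n%:R < (b1%:R / r1%:R : rat)))
  /\ Delta n (b1 + b2) (r1 + r2) = Delta n b1 r1 + Delta n b2 r2.
Proof.
move=> pb1 pr1 pb2 pr2 h pn H.
have NB := @nobetween b1 r1 b2 r2 n h H.
split.
  move=> b [l1 l2]; apply: (NB b); split.
  - move: l1; rewrite ltr_pdivrMr ?ltr0n // mulrAC ltr_pdivlMr ?ltr0n //.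
    rewrite !pmulrn -!intrM ltr_int mulrC => ll; lia.
  - move: l2; rewrite ltr_pdivlMr ?ltr0n // mulrAC ltr_pdivrMr ?ltr0n //.
    rewrite !pmulrn -!intrM ltr_int mulrC => ll; lia.
set q := (n * b2 %/ r2)%N.
have hN : (b1 * r2 = b2 * r1 + 1)%N by lia.
have E2 := divn_eq (n * b2) r2.
have M2 := ltn_pmod (n * b2) pr2.
have A1 : (q * r2 <= n * b2)%N by lia.
have A2 : (n * b2 < q.+1 * r2)%N by lia.
have B1 : (q * r1 <= n * b1)%N.
  have : (q * r2 * r1 < n * b1 * r2)%N.
    apply: (leq_ltn_trans (leq_mul A1 (leqnn r1))).
    have -> : (n * b1 * r2 = n * (b1 * r2))%N by rewrite mulnA.
    rewrite hN; nia.
  rewrite mulnAC ltn_pmul2r //; exact: ltnW.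
have B2 : (n * b1 <= q.+1 * r1)%N.
  rewrite leqNgt; apply/negP => C; apply: (NB (Posz q.+1)); split; lia.
rewrite (key n (b1+b2) (r1+r2) q) ?addn_gt0 ?pr1 //; try lia.
rewrite (key n (b1) (r1) q) //.
rewrite (key n (b2) (r2) q) //; try lia.
by rewrite !natrD !natrM; field.
Qed.
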